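(* For every integer $\kappa_c\ge0$, every agent $i$ and every softmax parameter $\theta$, $$\sup_{\overline Q_i^{\theta,\kappa_c}\in\mathcal Q_i^{\theta,\kappa_c}}\ \max_{s\in\mathcal S,\,a_i\in\mathcal A_i}\left|\overline Q_i^{\theta,\kappa_c}(s_{N_i^{\kappa_c}},a_i)-\overline Q_i^\theta(s,a_i)\right|\le\frac{2\min(\gamma^{\kappa_c-\kappa_r+1},1)}{1-\gamma}.$$
   Context: Networked Markov game. There are $n$ agents $\mathcal N=\{1,\dots,n\}$ placed at the nodes of an undirected graph $\mathcal G=(\mathcal N,\mathcal E)$ with graph distance $\mathrm{dist}$. For an integer $\kappa\ge0$, $N_i^\kappa=\{j\in\mathcal N:\mathrm{dist}(i,j)\le\kappa\}$ (so $i\in N_i^\kappa$), $\mathcal N_i=N_i^1$, $-N_i^\kappa=\mathcal N\setminus N_i^\kappa$, and $n(\kappa)=\max_i|N_i^\kappa|$. Agent $i$ has a finite local state space $\mathcal S_i$ and a finite local action space $\mathcal A_i$; $\mathcal S=\prod_i\mathcal S_i$, $\mathcal A=\prod_i\mathcal A_i$, and for $I\subseteq\mathcal N$ we write $s_I,a_I,\mathcal S_I,\mathcal A_I$ for the joint states/actions/spaces of the agents in $I$ (the subscript $-i$ means $\mathcal N\setminus\{i\}$). The dynamics are $\mathcal P(s'\mid s,a)=\prod_i\mathcal P_i(s_i'\mid s_{\mathcal N_i},a_i)$, the initial distribution is $\mu\in\Delta(\mathcal S)$, and $\gamma\in(0,1)$ is a discount factor. Each agent has a reward $r_i:\mathcal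 S\times\mathcal A\to[0,1]$ depending only on $(s_{N_i^{\kappa_r}},a_{N_i^{\kappa_r}})$ for a fixed integer $\kappa_r\ge0$. A local policy of agent $i$ is a map $\xi_i:\mathcal S_i\to\Delta(\mathcal A_i)$; $\Xi_i$ is the set of them, $\Xi_I=\prod_{i\in I}\Xi_i$, $\Xi=\Xi_{\mathcal N}$, and a joint policy $\xi=(\xi_1,\dots,\xi_n)$ acts by $\xi(a\mid s)=\prod_i\xi_i(a_i\mid s_i)$. For $\xi\in\Xi$: $Q_i^\xi(s,a)=\sum_{t\ge0}\gamma^t\mathbb E_\xi[r_i(s(t),a(t))\mid s(0)=s,a(0)=a]$; $\overline Q_i^\xi(s,a_i)=\mathbb E_{a_{-i}\sim\xi_{-i}(\cdot\mid s_{-i})}Q_i^\xi(s,a_i,a_{-i})$. Softmax policies: for $\theta_i\in\mathbb R^{|\mathcal S_i||\mathcal A_i|}$, $\xi_i^{\theta_i}(a_i\mid s_i)=\exp(\theta_{i,s_i,a_i})/\sum_{a_i'\in\mathcal A_i}\exp(\theta_{i,s_i,a_i'})$; $\xi^\theta=(\xi_1^{\theta_1},\dots,\xi_n^{\theta_n})$ and $\overline Q_i^\theta:=\overline Q_i^{\xi^\theta}$. Truncated averaged $Q$-functions: $\mathcal Q_i^{\theta,\kappa_c}$ is the set of all functions $\overline Q_i^{\theta,\kappa_c}:\mathcal S_{N_i^{\kappa_c}}\times\mathcal A_i\to\mathbb R$ for which there is a distribution $u_i\in\Delta(\mathcal S_{-N_i^{\kappa_c}})$ with $\overline Q_i^{\theta,\kappa_c}(s_{N_i^{\kappa_c}},a_i)=\mathbb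 E_{s_{-N_i^{\kappa_c}}\sim u_i}[\overline Q_i^\theta(s_{N_i^{\kappa_c}},s_{-N_i^{\kappa_c}},a_i)]$ for all $(s_{N_i^{\kappa_c}},a_i)$. *)

(* Defs.v *)
From HB Require Import structures.
From mathcomp Require Import all_boot all_order all_algebra.
From mathcomp Require Import all_classical all_reals all_analysis.
Unset Printing Implicit Defensive.
Import Order.TTheory GRing.Theory Num.Theory.
Local Open Scope ring_scope.

Section NetMG.
Variables (R : realType) (n : nat).
Variable (S A : 'I_n -> finType).

Definition JS := {dffun forall i : 'I_n, S i}.
Definition JA := {dffun forall i : 'I_n, A i}.

Fixpoint nbhd (e : rel 'I_n) (k : nat) (i : 'I_n) : {set 'I_n} :=
  match k with
  | 0 => [set i]
  | k'.+1 => nbhd e k' i :|: [set j | [exists l in nbhd e k' i, e l j]]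
  end.

Definition jpol (xi : forall i, S i -> A i -> R) (s : JS) (a : JA) : R :=
  \prod_(i < n) xi i (s i) (a i).

Definition jtrans (P : forall i, JS -> A i -> S i -> R) (s : JS) (a : JA) (s' : JS) : R :=
  \prod_(i < n) P i s (a i) (s' i).

(* occ t s0 a0 s a = Pr_xi[ s(t) = s, a(t) = a | s(0) = s0, a(0) = a0 ] *)
Fixpoint occ (P : forall i, JS -> A i -> S i -> R) (xi : forall i, S i -> A i -> R)
    (s0 : JS) (a0 : JA) (t : nat) : JS -> JA -> R :=
  match t with
  | 0 => fun s a => ((s == s0) && (a == a0))%:R
  | t'.+1 => fun s' a' =>
      \sum_(s : JS) \sum_(a : JA)
        occ P xi s0 a0 t' s a * jtrans P s a s' * jpol xi s' a'
  end.

Definition Qfun (gamma : R) (P : forall i, JS -> A i -> S i -> R)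
    (xi : forall i, S i -> A i -> R) (r : JS -> JA -> R) (s : JS) (a : JA) : R :=
  limn (fun N : nat => \sum_(0 <= t < N)
     (gamma ^+ t * \sum_(s' : JS) \sum_(a' : JA) occ P xi s a t s' a' * r s' a')).

Definition Qbar (gamma : R) (P : forall i, JS -> A i -> S i -> R)
    (xi : forall i, S i -> A i -> R) (r : JS -> JA -> R) (i : 'I_n)
    (s : JS) (ai : A i) : R :=
  \sum_(a : JA | a i == ai)
     (\prod_(j < n | j != i) xi j (s j) (a j)) * Qfun gamma P xi r s a.

Definition softmax (theta : forall i, S i -> A i -> R) (i : 'I_n) (si : S i) (ai : A i) : R :=
  expR (theta i si ai) / \sum_(b : A i) expR (theta i si b).

Definition glue (I : {set 'I_n}) (s s' : JS) : JS :=
  [ffun j => if j \in I then s j else s' j].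

(* Q_i^{theta,kc}: functions Qt of (s_{N_i^kc}, a_i), represented as functions
   of the full state s depending on s only through s_{N}, of the form
   Qt(s_N,a_i) = E_{s'_{-N} ~ u} Qbar(s_N, s'_{-N}, a_i) for a distribution u
   (a distribution on S_{-N} is represented by a distribution on JS whose
   marginal on the coordinates outside N is the distribution of interest). *)
Definition Qtrunc_set (gamma : R) (P : forall i, JS -> A i -> S i -> R)
    (theta : forall i, S i -> A i -> R) (r : JS -> JA -> R) (e : rel 'I_n)
    (kc : nat) (i : 'I_n) (Qt : JS -> A i -> R) : Prop :=
  exists u : JS -> R,
    (forall s, 0 <= u s) /\ \sum_(s : JS) u s = 1 /\
    forall (s : JS) (ai : A i),
      Qt s ai = \sum_(s' : JS) u s' *
                 Qbar gamma P (softmax theta) r i (glue (nbhd e kc i) s s') ai.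

End NetMG.

Arguments JS {n} S.
Arguments JA {n} A.
Arguments nbhd {n} e k i.
Arguments jpol {R n S A} xi s a.
Arguments jtrans {R n S A} P s a s'.
Arguments occ {R n S A} P xi s0 a0 t.
Arguments Qfun {R n S A} gamma P xi r s a.
Arguments Qbar {R n S A} gamma P xi r i s ai.
Arguments softmax {R n S A} theta i si ai.
Arguments glue {n S} I s s'.
Arguments Qtrunc_set {R n S A} gamma P theta r e kc i Qt.

(* Main.v *)
Require Import Defs.
From HB Require Import structures.
From mathcomp Require Import all_boot all_order all_algebra.
From mathcomp Require Import all_classical all_reals all_analysis.
From mathcomp Require Import ring lra zify.
Import Order.TTheory GRing.Theory Num.Theory.
Import numFieldNormedType.Exports.
Local Open Scope ring_scope.

Section Marg.
Variables (R : realType) (n : nat) (T : 'I_n -> finType).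
Notation JT := {dffun forall j : 'I_n, T j}.

Definition upd (s : JT) (m : 'I_n) (y : T m) : JT :=
  @finfun _ T (fun j => @dfwith _ T (fun j => s j) m y j).

Lemma upd_in s m y : upd s m y m = y.
Proof. rewrite /upd ffunE /=. exact: dfwith_in. Qed.

Lemma upd_out s m y j : m != j -> upd s m y j = s j.
Proof. move=> h; rewrite /upd ffunE /=; exact: dfwith_out. Qed.

Lemma updK s m y : upd (upd s m y) m (s m) = s.
Proof.
apply/ffunP => j; case: (eqVneq m j) => [<-|h]; first by rewrite upd_in.
by rewrite !upd_out.
Qed.

Lemma sum_delta (U : finType) (x0 : U) (g : U -> R) :
  \sum_(x : U) (x == x0)%:R * g x = g x0.
Proof.
rewrite (bigD1 x0) //= eqxx mul1r big1 ?addr0 // => x /negbTE ->.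
by rewrite mul0r.
Qed.

Lemma swap_id m (phi : JT -> R) (F : T m -> R) :
  (forall s y, phi (upd s m y) = phi s) ->
  #|T m|%:R * \sum_(s : JT) phi s * F (s m) =
  (\sum_(s : JT) phi s) * \sum_(y : T m) F y.
Proof.
move=> hphi.
have -> : #|T m|%:R * \sum_(s : JT) phi s * F (s m) =
   \sum_(p : JT * T m) phi p.1 * F (p.1 m).
  rewrite -[RHS](pair_bigA _ (fun s (y : T m) => phi s * F (s m))) /=.
  rewrite mulr_sumr; apply: eq_bigr => s _.
  by rewrite sumr_const mulr_natl.
pose tau (p : JT * T m) := (upd p.1 m p.2, p.1 m).
have tauK : involutive tau.
  by move=> [s y]; rewrite /tau /= updK upd_in.
rewrite (reindex_inj (inv_inj tauK)) /=.
rewrite -[LHS](pair_bigA _ (fun s (y : T m) => phi (upd s m y) * F (upd s m y m))) /=.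
rewrite mulr_suml.
apply: eq_bigr => s _; rewrite mulr_sumr; apply: eq_bigr => y _.
by rewrite hphi upd_in.
Qed.

Lemma swap2 m (phi : JT -> R) (F G : T m -> R) :
  (forall s y, phi (upd s m y) = phi s) ->
  \sum_(y : T m) F y = \sum_(y : T m) G y ->
  \sum_(s : JT) phi s * F (s m) = \sum_(s : JT) phi s * G (s m).
Proof.
move=> hphi hFG.
have [c0|cn0] := eqVneq #|T m| 0%N.
  have E (s : JT) : False by have := card0_eq c0 (s m); rewrite !inE.
  by rewrite !big1 // => s; case: (E s).
apply: (mulfI (x := #|T m|%:R)); first by rewrite pnatr_eq0.
by rewrite !swap_id // hFG.
Qed.

Lemma marg (K : {set 'I_n}) (F G : forall j, T j -> R) (h : JT -> R) :
  (forall j, j \in K -> forall x, F j x = G j x) ->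
  (forall j, j \notin K -> \sum_x F j x = \sum_x G j x) ->
  (forall s s' : JT, (forall j, j \in K -> s j = s' j) -> h s = h s') ->
  \sum_(s : JT) (\prod_j F j (s j)) * h s =
  \sum_(s : JT) (\prod_j G j (s j)) * h s.
Proof.
move=> hK hnK hh.
pose H (k : nat) (s : JT) := \prod_(j : 'I_n) (if (nat_of_ord j < k)%N then G j (s j) else F j (s j)).
have key : forall k, (k <= n)%N ->
  \sum_(s : JT) H 0%N s * h s = \sum_(s : JT) H k s * h s.
  elim=> [//|k IH] hk.
  rewrite IH ?(ltnW hk) //.
  pose m := Ordinal hk.
  pose C (s : JT) := \prod_(j : 'I_n | j != m)
      (if (nat_of_ord j < k)%N then G j (s j) else F j (s j)).
  have E1 s : H k s * h s = (C s * h s) * F m (s m).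
    by rewrite /H (bigD1 m) //= ltnn [RHS]mulrC mulrA.
  have E2 s : H k.+1 s * h s = (C s * h s) * G m (s m).
    rewrite /H (bigD1 m) //= ltnSn [RHS]mulrC mulrA; congr (_ * _ * _).
    apply: eq_bigr => j hj; rewrite ltnS leq_eqVlt.
    have -> : (nat_of_ord j == k) = false.
      by apply/negbTE; apply: contra hj => /eqP hjk; apply/eqP/val_inj.
    by [].
  rewrite (eq_bigr _ (fun s _ => E1 s)) (eq_bigr _ (fun s _ => E2 s)).
  case: (boolP (m \in K)) => hm.
    by apply: eq_bigr => s _; rewrite hK.
  apply: swap2; last exact: hnK.
  move=> s y; congr (_ * _).
    apply: eq_bigr => j hj; rewrite upd_out //; by rewrite eq_sym.
  apply: hh => j hj; apply: upd_out; apply: contra hm => /eqP ->.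
  by [].
have E := key n (leqnn n).
transitivity (\sum_(s : JT) H 0%N s * h s).
  by apply: eq_bigr => s _; congr (_ * _); apply: eq_bigr => j _; rewrite ltn0.
rewrite E; apply: eq_bigr => s _; congr (_ * _); apply: eq_bigr => j _.
by rewrite ltn_ord.
Qed.

Lemma sum_prod1 (s0 : JT) (F : forall j, T j -> R) :
  (forall j, \sum_x F j x = 1) -> \sum_(s : JT) \prod_j F j (s j) = 1.
Proof.
move=> hF.
have := @marg (@finset.set0 _) F (fun j x => (x == s0 j)%:R) (fun _ => 1).
rewrite !(eq_bigr _ (fun s _ => mulr1 _)) => ->.
- have -> : \sum_(s : JT) \prod_j ((s j == s0 j)%:R : R) =
            \sum_(s : JT) (s == s0)%:R * 1.
    apply: eq_bigr => s _; rewrite mulr1.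
    case: (eqVneq s s0) => [->|hne].
      by rewrite big1 // => j _; rewrite eqxx.
    have [j hj] : exists j, s j != s0 j.
      apply/existsP; apply: contraR hne; rewrite negb_exists => /forallP hall.
      by apply/eqP/ffunP => j; apply/eqP; have := hall j; rewrite negbK.
    by rewrite (bigD1 j) //= (negbTE hj) mul0r.
  by rewrite sum_delta.
- by move=> j; rewrite inE.
- move=> j _; rewrite hF (bigD1 (s0 j)) //= eqxx big1 ?addr0 //.
  by move=> x /negbTE ->.
- by [].
Qed.

End Marg.
Arguments upd {n T} s m y.

Section Net.
Variables (R : realType) (n : nat) (S A : 'I_n -> finType).
Variable (P : forall i : 'I_n, JS S -> A i -> S i -> R).
Variable (xi : forall i : 'I_n, S i -> A i -> R).

Definition Top (f : JS S -> JA A -> R) (s : JS S) (a : JA A) : R :=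
  \sum_(s' : JS S) \sum_(a' : JA A) jtrans P s a s' * jpol xi s' a' * f s' a'.

Fixpoint Tn (t : nat) (f : JS S -> JA A -> R) : JS S -> JA A -> R :=
  match t with 0 => f | t'.+1 => Tn t' (Top f) end.

Lemma occ_T t : forall f s0 a0,
  \sum_(s : JS S) \sum_(a : JA A) occ P xi s0 a0 t s a * f s a = Tn t f s0 a0.
Proof.
elim: t => [|t IH] f s0 a0 /=.
  have E s a : ((s == s0) && (a == a0))%:R * f s a =
               (s == s0)%:R * ((a == a0)%:R * f s a) :> R.
    by rewrite mulrA -natrM mulnb.
  under eq_bigr do under eq_bigr do rewrite E.
  under eq_bigr do rewrite -mulr_sumr sum_delta.
  by rewrite sum_delta.
rewrite -IH.
transitivity (\sum_(s' : JS S) \sum_(a' : JA A) \sum_(s : JS S) \sum_(a : JA A)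
   occ P xi s0 a0 t s a * (jtrans P s a s' * jpol xi s' a' * f s' a')).
  apply: eq_bigr => s' _; apply: eq_bigr => a' _.
  rewrite mulr_suml; apply: eq_bigr => s _; rewrite mulr_suml.
  by apply: eq_bigr => a _; rewrite !mulrA.
under eq_bigr do rewrite exchange_big /=.
rewrite [LHS]exchange_big /=.
apply: eq_bigr => s _.
under eq_bigr do rewrite exchange_big /=.
rewrite [LHS]exchange_big /=.
apply: eq_bigr => a _.
rewrite /Top mulr_sumr; apply: eq_bigr => s' _.
by rewrite mulr_sumr.
Qed.

Hypothesis hP_ge0 : forall i s ai si, 0 <= P i s ai si.
Hypothesis hP_sum : forall i s ai, \sum_(si : S i) P i s ai si = 1.
Hypothesis xi_ge0 : forall i si ai, 0 <= xi i si ai.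
Hypothesis xi_sum : forall i si, \sum_(ai : A i) xi i si ai = 1.

Lemma jtrans_ge0 s a s' : 0 <= jtrans P s a s'.
Proof. by apply: prodr_ge0 => j _. Qed.

Lemma jpol_ge0 s a : 0 <= jpol xi s a.
Proof. by apply: prodr_ge0 => j _. Qed.

Lemma Top1 s a : Top (fun _ _ => 1) s a = 1.
Proof.
rewrite /Top.
under eq_bigr do under eq_bigr do rewrite mulr1.
under eq_bigr => s' _ do rewrite -mulr_sumr (@sum_prod1 R n A a (fun j b => xi j (s' j) b)) // mulr1.
exact: (@sum_prod1 R n S s (fun j x => P j s (a j) x)).
Qed.

Lemma Top_bnd f : (forall s a, 0 <= f s a <= 1) -> forall s a, 0 <= Top f s a <= 1.
Proof.
move=> hf s a; apply/andP; split.
  apply: sumr_ge0 => s' _; apply: sumr_ge0 => a' _.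
  by rewrite !mulr_ge0 ?jtrans_ge0 ?jpol_ge0 //; case/andP: (hf s' a').
rewrite -(Top1 s a); apply: ler_sum => s' _; apply: ler_sum => a' _.
by rewrite ler_wpM2l ?mulr_ge0 ?jtrans_ge0 ?jpol_ge0 //; case/andP: (hf s' a').
Qed.

Lemma Tn_bnd t : forall f, (forall s a, 0 <= f s a <= 1) ->
  forall s a, 0 <= Tn t f s a <= 1.
Proof. elim: t => [//|t IH] f hf /=; apply: IH; exact: Top_bnd. Qed.

Definition loc (K : {set 'I_n}) (f : JS S -> JA A -> R) :=
  forall (s s' : JS S) (a a' : JA A), (forall j, j \in K -> s j = s' j) ->
    (forall j, j \in K -> a j = a' j) -> f s a = f s' a'.

Lemma loc_mono (K K' : {set 'I_n}) f : (forall j, j \in K -> j \in K') -> loc K f -> loc K' f.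
Proof. move=> hKK' hf s s' a a' hs ha; apply: hf => j hj; [apply: hs|apply: ha]; exact: hKK'. Qed.

Variable (e : rel 'I_n).
Hypothesis hP_loc : forall i (s s' : JS S) ai,
      (forall j, j \in nbhd e 1 i -> s j = s' j) ->
      forall si, P i s ai si = P i s' ai si.

Lemma Top_loc (K K' : {set 'I_n}) f : (forall j, j \in K -> j \in K') ->
  (forall j l, j \in K -> l \in nbhd e 1 j -> l \in K') ->
  loc K f -> loc K' (Top f).
Proof.
move=> hKK' hN hf s s2 a a2 hs ha.
pose g (s' : JS S) := \sum_(a' : JA A) jpol xi s' a' * f s' a'.
have Tg (s0 : JS S) (a0 : JA A) : Top f s0 a0 = \sum_(s' : JS S) jtrans P s0 a0 s' * g s'.
  rewrite /Top; apply: eq_bigr => s' _; rewrite mulr_sumr; apply: eq_bigr => a' _.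
  by rewrite mulrA.
have gloc (s' s'' : JS S) : (forall j, j \in K -> s' j = s'' j) -> g s' = g s''.
  move=> h; rewrite /g.
  transitivity (\sum_(a' : JA A) jpol xi s' a' * f s'' a').
    by apply: eq_bigr => a' _; congr (_ * _); apply: hf.
  rewrite /jpol.
  apply: (@marg R n A K (fun j b => xi j (s' j) b) (fun j b => xi j (s'' j) b)).
  - by move=> j hj x; rewrite h.
  - by move=> j _; rewrite !xi_sum.
  - by move=> b b' hb; apply: hf.
rewrite !Tg /jtrans.
apply: (@marg R n S K (fun j x => P j s (a j) x) (fun j x => P j s2 (a2 j) x)).
- move=> j hj x /=; rewrite ha; last exact: hKK'.
  by apply: hP_loc => l hl; apply: hs; exact: hN hl.
- by move=> j _; rewrite !hP_sum.
- exact: gloc.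
Qed.

Lemma nbhd_sub k i j : j \in nbhd e k i -> j \in nbhd e k.+1 i.
Proof. by move=> h /=; rewrite inE h. Qed.

Lemma nbhd_step k i j l : j \in nbhd e k i -> l \in nbhd e 1 j -> l \in nbhd e k.+1 i.
Proof.
move=> hj /=; rewrite !inE => /orP [/eqP ->|]; first by rewrite hj.
case/existsP => x /andP [hx hxl]; rewrite inE in hx; move/eqP: hx => hx; subst x.
apply/orP; right; apply/existsP; exists j; by rewrite hj.
Qed.

Lemma nbhd_mono k k' i j : (k <= k')%N -> j \in nbhd e k i -> j \in nbhd e k' i.
Proof.
move=> hk; elim: k' hk => [|k' IH]; first by rewrite leqn0 => /eqP ->.
rewrite leq_eqVlt => /orP [/eqP -> //|hk] hj.
by apply: nbhd_sub; apply: IH.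
Qed.

Lemma Tn_loc i t : forall k f, loc (nbhd e k i) f -> loc (nbhd e (k + t) i) (Tn t f).
Proof.
elim: t => [|t IH] k f hf /=; first by rewrite addn0.
rewrite -addSnnS; apply: IH.
apply: Top_loc hf; [exact: nbhd_sub | exact: nbhd_step].
Qed.

End Net.
Arguments Top {R n S A} P xi f s a.
Arguments Tn {R n S A} P xi t f.
Arguments loc {R n S A} K f.

Section Geo.
Local Open Scope classical_set_scope.
Local Open Scope ring_scope.
Variable R : realType.

Lemma geo_inv (g : R) k0 N :
  (1 - g) * \sum_(0 <= t < N) g ^+ t * (k0 <= t)%N%:R + g ^+ (maxn N k0) = g ^+ k0.
Proof.
elim: N => [|N IH]; first by rewrite big_nil mulr0 add0r max0n.
rewrite big_nat_recr // mulrDr.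
case: (leqP k0 N) => h.
  have -> : maxn N.+1 k0 = N.+1 by apply/maxn_idPl; exact: leqW.
  move: IH; have -> : maxn N k0 = N by apply/maxn_idPl.
  rewrite mulr1 exprS => <-; ring.
have -> : maxn N.+1 k0 = k0 by apply/maxn_idPr.
move: IH; have -> : maxn N k0 = k0 by apply/maxn_idPr; exact: ltnW.
by rewrite mulr0 mulr0 addr0.
Qed.

Lemma geo_bnd (g : R) k0 N : 0 <= g < 1 ->
  \sum_(0 <= t < N) g ^+ t * (k0 <= t)%N%:R <= g ^+ k0 / (1 - g).
Proof.
case/andP => g0 g1.
rewrite ler_pdivlMr ?subr_gt0 // mulrC -(geo_inv g k0 N) lerDl.
exact: exprn_ge0.
Qed.

Lemma cvg_sumR (I : finType) (Pr : pred I) (f : I -> nat -> R) (l : I -> R) :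
  (forall x, f x @ \oo --> l x) ->
  (fun N => \sum_(x | Pr x) f x N) @ \oo --> \sum_(x | Pr x) l x.
Proof.
move=> hf; rewrite -fct_sumE.
apply: (big_ind2 (fun (g : nat -> R) (y : R) => g @ \oo --> y)).
- exact: cvg_cst.
- by move=> x1 x2 y1 y2 h1 h2; apply: cvgD.
- by move=> x _; apply: hf.
Qed.

End Geo.

Section Main.
Local Open Scope classical_set_scope.
Local Open Scope ring_scope.
Variables (R : realType) (n : nat) (S A : 'I_n -> finType) (e : rel 'I_n).
Variable (P : forall i : 'I_n, JS S -> A i -> S i -> R).
Hypothesis hP_ge0 : forall i s ai si, 0 <= P i s ai si.
Hypothesis hP_sum : forall i s ai, \sum_(si : S i) P i s ai si = 1.
Hypothesis hP_loc : forall i (s s' : JS S) ai,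
      (forall j, j \in nbhd e 1 i -> s j = s' j) ->
      forall si, P i s ai si = P i s' ai si.
Variable (xi : forall i : 'I_n, S i -> A i -> R).
Hypothesis xi_ge0 : forall i si ai, 0 <= xi i si ai.
Hypothesis xi_sum : forall i si, \sum_(ai : A i) xi i si ai = 1.
Variable gamma : R.
Hypothesis hg : 0 < gamma < 1.
Variables (kr : nat) (i : 'I_n) (r : JS S -> JA A -> R).
Hypothesis hr01 : forall s a, 0 <= r s a <= 1.
Hypothesis hrloc : loc (nbhd e kr i) r.
Variable a0 : JA A.

Let c t s a := Tn P xi t r s a.
Let u s a (N : nat) := \sum_(0 <= t < N) gamma ^+ t * c t s a.

Lemma c_bnd t s a : 0 <= c t s a <= 1.
Proof. exact: Tn_bnd. Qed.

Lemma Qfun_eq s a : Qfun gamma P xi r s a = limn (u s a).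
Proof.
rewrite /Qfun.
have -> : (fun N : nat => \sum_(0 <= t < N) (gamma ^+ t *
   \sum_(s' : JS S) \sum_(a' : JA A) occ P xi s a t s' a' * r s' a')) = u s a.
  by apply/funext => N; apply: eq_bigr => t _; rewrite occ_T.
by [].
Qed.

Lemma hg' : 0 <= gamma < 1.
Proof. by case/andP: hg => h1 h2; rewrite ltW. Qed.

Lemma u_le s a N k0 : (forall t, (t < k0)%N -> c t s a = 0) ->
  u s a N <= \sum_(0 <= t < N) gamma ^+ t * (k0 <= t)%N%:R.
Proof.
move=> hk; apply: ler_sum => t _; case: (leqP k0 t) => h.
  rewrite mulr1 ler_piMr ?exprn_ge0 ?(andP hg').1 //.
  by case/andP: (c_bnd t s a).
by rewrite hk // !mulr0.
Qed.

Lemma u_cvg s a : cvgn (u s a).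
Proof.
apply: nondecreasing_is_cvgn.
  move=> m k hmk; rewrite /u (@big_cat_nat _ _ _ m 0 k) //= lerDl.
  apply: sumr_ge0 => t _; rewrite mulr_ge0 ?exprn_ge0 ?(andP hg').1 //.
  by case/andP: (c_bnd t s a).
exists (gamma ^+ 0 / (1 - gamma)) => _ [N _ <-].
apply: (le_trans _ (@geo_bnd R gamma 0 N hg')).
apply: ler_sum => t _; rewrite leq0n mulr1 ler_piMr ?exprn_ge0 ?(andP hg').1 //.
by case/andP: (c_bnd t s a).
Qed.

Let w (s : JS S) (a : JA A) := \prod_(j < n | j != i) xi j (s j) (a j).

Lemma Qbar_cvg s ai :
  (fun N => \sum_(a : JA A | a i == ai) w s a * u s a N) @ \oo -->
  Qbar gamma P xi r i s ai.
Proof.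
rewrite /Qbar; apply: cvg_sumR => a.
rewrite Qfun_eq; apply: cvgMl_tmp; exact: u_cvg.
Qed.

Definition Ebar t s ai := \sum_(a : JA A | a i == ai) w s a * c t s a.

Lemma seq_eq s ai N : \sum_(a : JA A | a i == ai) w s a * u s a N =
   \sum_(0 <= t < N) gamma ^+ t * Ebar t s ai.
Proof.
rewrite /Ebar.
under eq_bigr do rewrite /u mulr_sumr.
rewrite exchange_big /=; apply: eq_bigr => t _; rewrite mulr_sumr.
by apply: eq_bigr => a _; rewrite mulrCA.
Qed.

Let astar (ai : A i) := upd a0 i ai.
Let F (s : JS S) (ai : A i) (j : 'I_n) (b : A j) : R :=
  if j == i then (b == astar ai j)%:R else xi j (s j) b.

Lemma Ebar_full (g : JA A -> R) s ai :
  \sum_(a : JA A | a i == ai) w s a * g a =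
  \sum_(a : JA A) (\prod_j F s ai j (a j)) * g a.
Proof.
rewrite big_mkcond /=; apply: eq_bigr => a _.
rewrite (bigD1 i) //= /F eqxx /astar upd_in.
have -> : \prod_(j < n | j != i) (if j == i then (a j == upd a0 i ai j)%:R else xi j (s j) (a j))
   = w s a.
  by apply: eq_bigr => j /negbTE ->.
by case: (a i == ai); rewrite ?mul1r ?mul0r.
Qed.

Lemma F_sum s ai j : \sum_b F s ai j b = 1.
Proof.
rewrite /F; case: (j == i); last exact: xi_sum.
rewrite (bigD1 (astar ai j)) //= eqxx big1 ?addr0 // => x /negbTE ->.
by [].
Qed.

Lemma Ebar_bnd t s ai : 0 <= Ebar t s ai <= 1.
Proof.
rewrite /Ebar Ebar_full; apply/andP; split.
  apply: sumr_ge0 => a _; apply: mulr_ge0; last by case/andP: (c_bnd t s a).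
  apply: prodr_ge0 => j _; rewrite /F; case: (j == i) => //.
rewrite -[X in _ <= X](@sum_prod1 R n A a0 (F s ai)); last exact: F_sum.
apply: ler_sum => a _. rewrite ler_piMr //; last by case/andP: (c_bnd t s a).
apply: prodr_ge0 => j _; rewrite /F; case: (j == i) => //.
Qed.

Variable kc : nat.

Lemma Ebar_loc t (s1 s2 : JS S) ai : (t + kr <= kc)%N ->
  (forall j, j \in nbhd e kc i -> s1 j = s2 j) ->
  Ebar t s1 ai = Ebar t s2 ai.
Proof.
move=> htk hs.
have hl : loc (nbhd e kc i) (c t).
  apply: (@loc_mono R n S A (nbhd e (kr + t) i)).
    by move=> j; apply: nbhd_mono; rewrite addnC.
  exact: (@Tn_loc R n S A P xi hP_sum xi_sum e hP_loc i t kr r hrloc).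
rewrite /Ebar !Ebar_full.
transitivity (\sum_(a : JA A) (\prod_j F s1 ai j (a j)) * c t s2 a).
  by apply: eq_bigr => a _; congr (_ * _); apply: hl.
apply: (@marg R n A (nbhd e kc i)).
- by move=> j hj b; rewrite /F hs.
- by move=> j _; rewrite !F_sum.
- by move=> b b' hb; apply: hl.
Qed.

Lemma Qbar_diff (s1 s2 : JS S) ai :
  (forall j, j \in nbhd e kc i -> s1 j = s2 j) ->
  `| Qbar gamma P xi r i s1 ai - Qbar gamma P xi r i s2 ai |
     <= gamma ^+ (kc.+1 - kr) / (1 - gamma).
Proof.
move=> hs.
apply: (cvgr_to_le (cvg_norm (cvgB (Qbar_cvg s1 ai) (Qbar_cvg s2 ai)))).
apply: nearW => N /=.
rewrite !fctE !seq_eq -sumrB.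
apply: le_trans (ler_norm_sum _ _ _) _.
apply: (le_trans _ (@geo_bnd R gamma _ N hg')).
apply: ler_sum => t _; rewrite -mulrBr normrM ger0_norm ?exprn_ge0 ?(andP hg').1 //.
apply: ler_wpM2l; first by rewrite exprn_ge0 ?(andP hg').1.
case: (leqP (kc.+1 - kr) t) => h.
  have := Ebar_bnd t s1 ai; have := Ebar_bnd t s2 ai.
  rewrite (_ : true%:R = 1) //. move=> /andP[h1 h2] /andP[h3 h4]; rewrite ler_norml; apply/andP; split; lra.
by rewrite (@Ebar_loc t s1 s2 ai _ hs) ?subrr ?normr0 //; lia.
Qed.

End Main.

Lemma final_arith (R : realType) (gamma : R) (kc kr : nat) : 0 < gamma < 1 ->
  gamma ^+ (kc.+1 - kr) / (1 - gamma) <=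
  2 * Num.min (gamma ^ (kc%:Z - kr%:Z + 1)) 1 / (1 - gamma).
Proof.
case/andP => g0 g1.
have hle : gamma ^+ (kc.+1 - kr) <= Num.min (gamma ^ (kc%:Z - kr%:Z + 1)) 1.
  have h1 : gamma ^+ (kc.+1 - kr) <= 1 by rewrite exprn_ile1 // ltW.
  have h2 : gamma ^+ (kc.+1 - kr) <= gamma ^ (kc%:Z - kr%:Z + 1).
    case: (leqP kr kc.+1) => hk.
      have -> : (kc%:Z - kr%:Z + 1) = (kc.+1 - kr)%N%:Z by lia.
      by [].
    have -> : (kc.+1 - kr)%N = 0%N by lia.
    have -> : (kc%:Z - kr%:Z + 1) = - (kr - kc.+1)%N%:Z by lia.
    rewrite -exprnN expr0 invf_ge1 ?exprn_gt0 //.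
    by rewrite exprn_ile1 // ltW.
  by case: (lerP (gamma ^ (kc%:Z - kr%:Z + 1)) 1).
have hm0 : 0 <= Num.min (gamma ^ (kc%:Z - kr%:Z + 1)) 1.
  apply: le_trans hle; exact: exprn_ge0 (ltW g0).
apply: ler_wpM2r; first by rewrite invr_ge0 subr_ge0 ltW.
lra.
Qed.

Theorem lemma1 (R : realType) (n : nat) (S A : 'I_n -> finType)
  (e : rel 'I_n) (he_sym : symmetric e) (he_irr : irreflexive e)
  (P : forall i : 'I_n, JS S -> A i -> S i -> R)
  (hP_ge0 : forall i s ai si, 0 <= P i s ai si)
  (hP_sum : forall i s ai, \sum_(si : S i) P i s ai si = 1)
  (hP_loc : forall i (s s' : JS S) ai,
      (forall j, j \in nbhd e 1 i -> s j = s' j) ->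
      forall si, P i s ai si = P i s' ai si)
  (gamma : R) (hgamma : 0 < gamma < 1)
  (kr : nat) (r : 'I_n -> JS S -> JA A -> R)
  (hr01 : forall i s a, 0 <= r i s a <= 1)
  (hr_loc : forall i (s s' : JS S) (a a' : JA A),
      (forall j, j \in nbhd e kr i -> s j = s' j /\ a j = a' j) ->
      r i s a = r i s' a')
  (kc : nat) (i : 'I_n) (theta : forall j : 'I_n, S j -> A j -> R)
  (Qt : JS S -> A i -> R) :
  Qtrunc_set gamma P theta (r i) e kc i Qt ->
  forall (s : JS S) (ai : A i),
    `| Qt s ai - Qbar gamma P (softmax theta) (r i) i s ai |
      <= 2 * Num.min (gamma ^ (kc%:Z - kr%:Z + 1)) 1 / (1 - gamma).
Proof.
move=> [u [hu0 [hu1 hQt]]] s ai.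
set B := 2 * Num.min _ _ / _.
have hB0 : 0 <= B.
  apply: (le_trans _ (@final_arith R gamma kc kr hgamma)).
  case/andP: hgamma => g0 g1.
  by rewrite divr_ge0 ?exprn_ge0 ?subr_ge0 // ltW.
case: (pickP (fun _ : JA A => true)) => [a0 _|hA]; last first.
  have Q0 s' : Qbar gamma P (softmax theta) (r i) i s' ai = 0.
    by rewrite /Qbar big1 // => a; have := hA a.
  rewrite hQt Q0 big1 ?subrr ?normr0 // => s' _.
  by rewrite Q0 mulr0.
have sm_ge0 j x b : 0 <= softmax theta j x b.
  rewrite /softmax divr_ge0 ?expR_ge0 ?sumr_ge0 // => b' _; exact: expR_ge0.
have sm_sum j x : \sum_b softmax theta j x b = 1.
  have hpos : 0 < \sum_b expR (theta j x b).
    apply: (lt_le_trans (expR_gt0 (theta j x (a0 j)))).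
    rewrite (bigD1 (a0 j)) //= lerDl sumr_ge0 // => b _; exact: expR_ge0.
  by rewrite /softmax -mulr_suml divff // gt_eqF.
have hrloc : loc (nbhd e kr i) (r i).
  move=> s1 s2 a1 a2 hs ha; apply: hr_loc => j hj; split; [exact: hs|exact: ha].
have hd (s' : JS S) : `| Qbar gamma P (softmax theta) (r i) i (Defs.glue (nbhd e kc i) s s') ai
     - Qbar gamma P (softmax theta) (r i) i s ai | <= B.
  apply: (le_trans _ (@final_arith R gamma kc kr hgamma)).
  apply: (@Qbar_diff R n S A e P hP_ge0 hP_sum hP_loc (softmax theta) sm_ge0 sm_sum gamma hgamma kr i (r i) (hr01 i) hrloc a0 kc).
  by move=> j hj; rewrite /Defs.glue ffunE hj.
rewrite hQt.
rewrite [X in _ - X](_ : _ = \sum_(s' : JS S) u s' * Qbar gamma P (softmax theta) (r i) i s ai);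
  last by rewrite -mulr_suml hu1 mul1r.
rewrite -sumrB.
apply: le_trans (ler_norm_sum _ _ _) _.
rewrite -[X in _ <= X]mul1r -hu1 mulr_suml.
apply: ler_sum => s' _; rewrite -mulrBr normrM ger0_norm //.
by apply: ler_wpM2l.
Qed.
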